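(* Let $n_*>2$ be an integer and let $\phi(b)=\upsilon\log b\,[\log\log b]^{1+\varepsilon}$ for $b\ge n_*+1$, with $\upsilon,\varepsilon>0$ such that $\phi(n_*+1)>1$. Let $\mathsf{G}\in\mathbb{G}(n_*,\phi)$. Then for any $\theta>0$ there exists $\underline{\alpha}\ge0$ (possibly depending on $\theta,n_*,\upsilon,\varepsilon$) such that $\mathit{\Theta}(\alpha,\theta)<\infty$ whenever $\alpha>\underline{\alpha}$.
   Context: All graphs $\mathsf{G}=(\mathsf{V},\mathsf{E})$ are countable, connected, locally finite and undirected; $n(x)$ is the degree of $x$, $\rho$ the path distance, $o\in\mathsf{V}$ a fixed root. For $\alpha,\theta>0$: $\mathit{\Theta}(\alpha,\theta)=\sum_{x\in\mathsf{V}}\sum_{y\sim x}[n(x)n(y)]^\theta\exp[-\alpha\rho(o,x)]$. For an integer $n_*>2$ put $\mathsf{V}_*=\{x:n(x)\le n_*\}$ and $\mathsf{V}_*^c=\mathsf{V}\setminus\mathsf{V}_*$. For a strictly increasing $\phi:(n_*,+\infty)\to(0,+\infty)$, the family $\mathbb{G}(n_*,\phi)$ consists of the graphs such that $\rho(x,y)\ge\phi[\max\{n(x),n(y)\}]$ for all $x,y\in\mathsf{V}_*^c$ (no condition if $x$ or $y$ lies in $\mathsf{V}_*$). *)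

(* Defs.v *)
From Stdlib Require Import Reals List Arith ClassicalEpsilon.
Open Scope R_scope.

(* A locally finite undirected simple graph on a vertex type V is given by its
   neighbourhood function N : V -> list V (the list of neighbours of x). *)
Section Graph.
Context {V : Type} (N : V -> list V).

Definition adj (x y : V) : Prop := In y (N x).

Definition deg (x : V) : nat := length (N x).

Inductive walk : V -> V -> nat -> Prop :=
  | walk0 x : walk x x 0
  | walkS x y z k : adj x y -> walk y z k -> walk x z (S k).

Definition is_graph : Prop :=
  (exists f : V -> nat, forall x y, f x = f y -> x = y) /\
  (forall x, NoDup (N x)) /\
  (forall x, ~ adj x x) /\
  (forall x y, adj x y -> adj y x) /\
  (forall x y, exists k, walk x y k).

Definition dist (x y : V) : nat :=
  epsilon (inhabits 0%nat)
    (fun d => walk x y d /\ forall k, walk x y k -> (d <= k)%nat).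

Definition Theta_term (o : V) (alpha theta : R) (x : V) : R :=
  fold_right Rplus 0
    (map (fun y => Rpower (INR (deg x * deg y)) theta
                   * exp (- alpha * INR (dist o x))) (N x)).

(* Theta(alpha,theta) < infinity: the (nonnegative) series over the countable
   vertex set has uniformly bounded finite partial sums *)
Definition Theta_finite (o : V) (alpha theta : R) : Prop :=
  exists M : R, forall l : list V, NoDup l ->
    fold_right Rplus 0 (map (Theta_term o alpha theta) l) <= M.

Definition in_family (nstar : nat) (phi : R -> R) : Prop :=
  forall x y, x <> y -> (nstar < deg x)%nat -> (nstar < deg y)%nat ->
    phi (INR (Nat.max (deg x) (deg y))) <= INR (dist x y).

End Graph.

Definition phi_ll (upsilon eps : R) (b : R) : R :=
  upsilon * ln b * Rpower (ln (ln b)) (1 + eps).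

(* Main.v *)
Require Import Defs.
From Stdlib Require Import Reals.
Open Scope R_scope.
From Stdlib Require Import Reals Lra Lia List Arith Classical ClassicalEpsilon.
Require Import Defs.
Open Scope R_scope.

Section G.
Context {V : Type} (N : V -> list V).

Lemma walk_snoc x y z k : walk N x y k -> adj N y z -> walk N x z (S k).
Proof. induction 1; intros; econstructor; eauto; constructor. Qed.

Lemma walk_app x y z k m : walk N x y k -> walk N y z m -> walk N x z (k+m).
Proof. induction 1; intros; simpl; auto. econstructor; eauto. Qed.

Lemma walk_last x z k : walk N x z (S k) -> exists y, walk N x y k /\ adj N y z.
Proof.
  revert x. induction k; intros x H; inversion H; subst.
  - inversion H4; subst. exists x. split; [constructor|auto].
  - destruct (IHk _ H4) as [w [Hw Ha]]. exists w. split; auto. econstructor; eauto.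
Qed.

Lemma walk_rev (Hs : forall x y, adj N x y -> adj N y x) x y k :
  walk N x y k -> walk N y x k.
Proof. induction 1. constructor. eapply walk_snoc; eauto. Qed.

Lemma least_ex (P : nat -> Prop) : (exists k, P k) ->
  exists d, P d /\ forall k, P k -> (d <= k)%nat.
Proof.
  intros [k Hk]. induction k as [k IH] using lt_wf_ind.
  destruct (classic (exists j, (j < k)%nat /\ P j)) as [[j [Hj Pj]]|Hn].
  - eapply IH; eauto.
  - exists k. split; auto. intros j Pj. destruct (Nat.le_gt_cases k j); auto.
    exfalso. apply Hn; eauto.
Qed.

Lemma dist_spec (Hc : forall x y, exists k, walk N x y k) x y :
  walk N x y (dist N x y) /\ forall k, walk N x y k -> (dist N x y <= k)%nat.
Proof.
  unfold dist. apply epsilon_spec. apply least_ex. apply Hc.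
Qed.

End G.

Section D2.
Context {V : Type} (N : V -> list V) (Hg : is_graph N).

Lemma Hc : forall x y, exists k, walk N x y k.
Proof. destruct Hg as [_ [_ [_ [_ H]]]]; exact H. Qed.
Lemma Hs : forall x y, adj N x y -> adj N y x.
Proof. destruct Hg as [_ [_ [_ [H _]]]]; exact H. Qed.

Lemma dist_walk x y : walk N x y (dist N x y).
Proof. apply (dist_spec N Hc). Qed.
Lemma dist_le x y k : walk N x y k -> (dist N x y <= k)%nat.
Proof. apply (dist_spec N Hc). Qed.

Lemma dist_tri x y z : (dist N x z <= dist N x y + dist N y z)%nat.
Proof. apply dist_le. eapply walk_app; apply dist_walk. Qed.

Lemma dist_sym x y : dist N x y = dist N y x.
Proof.
  apply Nat.le_antisymm; apply dist_le; apply walk_rev; try apply Hs; apply dist_walk.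
Qed.

Lemma dist_adj x y : adj N x y -> (dist N x y <= 1)%nat.
Proof. intros. apply dist_le. econstructor; eauto. constructor. Qed.

Lemma dist_pred o x d : dist N o x = S d -> exists y, In x (N y) /\ dist N o y = d.
Proof.
  intros H. pose proof (dist_walk o x) as W. rewrite H in W.
  destruct (walk_last N _ _ _ W) as [y [Wy Ay]]. exists y. split; [exact Ay|].
  pose proof (dist_le _ _ _ Wy).
  pose proof (dist_tri o y x). pose proof (dist_adj _ _ Ay). lia.
Qed.
End D2.

Lemma ln_le' x y : 0 < x -> x <= y -> ln x <= ln y.
Proof. intros. destruct (Req_dec x y). subst; lra. left; apply ln_increasing; lra. Qed.

Lemma exp_le' x y : x <= y -> exp x <= exp y.
Proof. intros. destruct (Req_dec x y). subst; lra. left; apply exp_increasing; lra. Qed.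

Lemma Rpower_pos a b : 0 < Rpower a b.
Proof. unfold Rpower; apply exp_pos. Qed.

Definition cst (nstar : nat) (ups eps : R) :=
  ups * Rpower (ln (ln (INR (S nstar)))) (1 + eps).

Lemma ln_gt1 (nstar : nat) : (2 < nstar)%nat -> 1 < ln (INR (S nstar)).
Proof.
  intros H. assert (4 <= INR (S nstar)).
  { replace 4 with (INR 4) by (simpl; lra). apply le_INR. lia. }
  assert (ln 4 <= ln (INR (S nstar))) by (apply ln_le'; lra).
  assert (ln 4 = ln 2 + ln 2) by (rewrite <- ln_mult; [f_equal|..]; lra).
  pose proof ln_lt_2. lra.
Qed.

Lemma cst_pos nstar ups eps : (2 < nstar)%nat -> 0 < ups -> 0 < cst nstar ups eps.
Proof. intros. unfold cst. apply Rmult_lt_0_compat; auto. apply Rpower_pos. Qed.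

Lemma phi_bounds nstar ups eps b : (2 < nstar)%nat -> 0 < ups -> 0 < eps ->
  INR (S nstar) <= b ->
  phi_ll ups eps (INR (S nstar)) <= phi_ll ups eps b /\
  cst nstar ups eps * ln b <= phi_ll ups eps b.
Proof.
  intros H2 Hu He Hb. pose proof (ln_gt1 _ H2) as L1.
  set (a := INR (S nstar)) in *.
  assert (Ha : 0 < a) by (unfold a; apply lt_0_INR; lia).
  assert (Lb : ln a <= ln b) by (apply ln_le'; lra).
  assert (LL : ln (ln a) <= ln (ln b)) by (apply ln_le'; lra).
  assert (LL0 : 0 < ln (ln a)). { rewrite <- ln_1. apply ln_increasing. lra. lra. }
  assert (RP : Rpower (ln (ln a)) (1+eps) <= Rpower (ln (ln b)) (1+eps)).
  { apply Rle_Rpower_l; lra. }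
  pose proof (Rpower_pos (ln (ln a)) (1+eps)).
  unfold phi_ll, cst. fold a. split.
  - apply Rmult_le_compat; [apply Rmult_le_pos; lra|lra| |lra].
    apply Rmult_le_compat_l; lra.
  - replace (ups * Rpower (ln (ln a)) (1 + eps) * ln b) with
      (ups * ln b * Rpower (ln (ln a)) (1 + eps)) by ring.
    apply Rmult_le_compat_l; auto. apply Rmult_le_pos; lra.
Qed.

Definition sumf {A} (f : A -> R) (l : list A) := fold_right Rplus 0 (map f l).

Lemma sumf_app {A} (f : A -> R) l1 l2 : sumf f (l1 ++ l2) = sumf f l1 + sumf f l2.
Proof. unfold sumf; induction l1; simpl; [lra|]. rewrite IHl1; lra. Qed.

Lemma sumf_flat {A B} (f : B -> R) (g : A -> list B) l :
  sumf f (flat_map g l) = sumf (fun a => sumf f (g a)) l.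
Proof. induction l; simpl. reflexivity. rewrite sumf_app, IHl. reflexivity. Qed.

Lemma sumf_mono {A} (f g : A -> R) l : (forall x, In x l -> f x <= g x) -> sumf f l <= sumf g l.
Proof. unfold sumf; induction l; simpl; intros H; [lra|].
  pose proof (H a (or_introl eq_refl)). pose proof (IHl (fun x h => H x (or_intror h))). lra. Qed.

Lemma sumf_nonneg {A} (f : A -> R) l : (forall x, In x l -> 0 <= f x) -> 0 <= sumf f l.
Proof. unfold sumf; induction l; simpl; intros H; [lra|].
  pose proof (H a (or_introl eq_refl)). pose proof (IHl (fun x h => H x (or_intror h))). lra. Qed.

Lemma sumf_le_len {A} (f : A -> R) l m : (forall x, In x l -> f x <= m) -> sumf f l <= INR (length l) * m.
Proof. unfold sumf; induction l; cbn [map fold_right length]; intros H; [simpl; lra|].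
  pose proof (H a (or_introl eq_refl)). pose proof (IHl (fun x h => H x (or_intror h))).
  rewrite S_INR. lra. Qed.

Lemma sumf_ge_len {A} (f : A -> R) l m : (forall x, In x l -> m <= f x) -> INR (length l) * m <= sumf f l.
Proof. unfold sumf; induction l; cbn [map fold_right length]; intros H; [simpl; lra|].
  pose proof (H a (or_introl eq_refl)). pose proof (IHl (fun x h => H x (or_intror h))).
  rewrite S_INR. lra. Qed.

Lemma sumf_sub {A} (f : A -> R) l L : (forall x, 0 <= f x) -> NoDup l -> incl l L ->
  sumf f l <= sumf f L.
Proof.
  intros Hf Hn. revert L. induction Hn as [|x l Hx Hn IH]; intros L Hi.
  - apply sumf_nonneg; auto.
  - assert (In x L) by (apply Hi; left; auto).
    destruct (in_split _ _ H) as [L1 [L2 ->]].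
    assert (incl l (L1 ++ L2)).
    { intros y Hy. assert (In y (L1 ++ x :: L2)) by (apply Hi; right; auto).
      apply in_app_or in H0. apply in_or_app. destruct H0 as [|[<-|]]; auto. contradiction. }
    specialize (IH _ H0). rewrite sumf_app in *. unfold sumf in *. simpl. lra.
Qed.

Lemma exp_INR_mul n x : exp (INR n * x) = (exp x) ^ n.
Proof. induction n. simpl. rewrite Rmult_0_l, exp_0; auto.
  cbn [pow]. rewrite S_INR, Rmult_plus_distr_r, exp_plus, IHn, Rmult_1_l. ring. Qed.

Lemma geom q m n : 0 <= q < 1 -> sumf (fun d => q ^ d) (seq m n) <= q ^ m / (1 - q).
Proof.
  intros Hq. revert m. induction n; intros m; simpl.
  - unfold sumf; simpl. apply Rmult_le_pos. apply pow_le; lra. left; apply Rinv_0_lt_compat; lra.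
  - unfold sumf in *; simpl. specialize (IHn (S m)). simpl in IHn.
    assert (q ^ m + q * q ^ m / (1 - q) = q ^ m / (1 - q)) by (field; lra). lra.
Qed.

Section Main.
Context (nstar : nat) (ups eps : R) (H2 : (2 < nstar)%nat) (Hu : 0 < ups) (He : 0 < eps)
  (Hphi : 1 < phi_ll ups eps (INR (S nstar))).
Context {V : Type} (N : V -> list V) (o : V) (Hg : is_graph N)
  (Hf : in_family N nstar (phi_ll ups eps)).

Let c := cst nstar ups eps.
Let k := / c.
Let r := exp k.
Definition high (y : V) := Nat.ltb nstar (deg N y).

Lemma c_pos : 0 < c. Proof. apply cst_pos; auto. Qed.
Lemma k_pos : 0 < k. Proof. apply Rinv_0_lt_compat, c_pos. Qed.

Lemma high_spec y : high y = true <-> (nstar < deg N y)%nat.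
Proof. unfold high. apply Nat.ltb_lt. Qed.

Lemma pair_bound w y : w <> y -> high w = true -> high y = true ->
  INR (deg N w) <= exp (k * INR (dist N w y)) /\ 1 < INR (dist N w y).
Proof.
  intros Hne Hw Hy. apply high_spec in Hw. apply high_spec in Hy.
  pose proof (Hf w y Hne Hw Hy) as Hp.
  set (m := Nat.max (deg N w) (deg N y)) in *.
  assert (INR (S nstar) <= INR m) by (apply le_INR; unfold m; lia).
  destruct (phi_bounds nstar ups eps (INR m) H2 Hu He H) as [P1 P2].
  split; [|lra].
  assert (0 < INR (deg N w)) by (apply lt_0_INR; lia).
  assert (ln (INR (deg N w)) <= ln (INR m)) by (apply ln_le'; auto; apply le_INR; unfold m; lia).
  pose proof c_pos.
  assert (ln (INR (deg N w)) <= k * INR (dist N w y)).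
  { unfold k. fold c in P2. apply Rmult_le_reg_l with c; auto.
    rewrite <- Rmult_assoc, Rinv_r by lra. nra. }
  rewrite <- (exp_ln (INR (deg N w))) by auto. apply exp_le'; auto.
Qed.

Lemma deg_global : exists A0, 0 <= A0 /\
  forall v, INR (deg N v) <= INR nstar + A0 * exp (k * INR (dist N o v)).
Proof.
  pose proof k_pos as Kp.
  destruct (classic (exists w0, high w0 = true)) as [[w0 Hw0]|Hn].
  - exists (INR (deg N w0) + exp (k * INR (dist N o w0))).
    split. { pose proof (pos_INR (deg N w0)). pose proof (exp_pos (k * INR (dist N o w0))). lra. }
    intros v. pose proof (pos_INR nstar).
    assert (E1 : 1 <= exp (k * INR (dist N o v))).
    { rewrite <- exp_0. apply exp_le'. pose proof (pos_INR (dist N o v)). nra. }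
    pose proof (pos_INR (deg N w0)). pose proof (exp_pos (k * INR (dist N o w0))).
    pose proof (exp_pos (k * INR (dist N o v))).
    destruct (high v) eqn:Hv.
    + destruct (classic (w0 = v)) as [<-|Hne].
      * nra.
      * destruct (pair_bound w0 v Hne Hw0 Hv) as [_ _].
        destruct (pair_bound v w0 (not_eq_sym Hne) Hv Hw0) as [B1 _].
        assert (T : (dist N v w0 <= dist N o w0 + dist N o v)%nat).
        { pose proof (dist_tri N Hg v o w0) as T. rewrite (dist_sym N Hg v o) in T. lia. }
        apply le_INR in T. rewrite plus_INR in T.
        assert (exp (k * INR (dist N v w0)) <= exp (k * INR (dist N o w0)) * exp (k * INR (dist N o v))).
        { rewrite <- exp_plus. apply exp_le'. nra. }
        nra.
    + assert (T : (deg N v <= nstar)%nat).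
      { destruct (Nat.le_gt_cases (deg N v) nstar) as [T|T]; auto. apply high_spec in T. congruence. }
      apply le_INR in T. nra.
  - exists 0. split; [lra|]. intros v. rewrite Rmult_0_l, Rplus_0_r. apply le_INR.
    destruct (Nat.le_gt_cases (deg N v) nstar); auto. exfalso. apply Hn. exists v. apply high_spec; auto.
Qed.

Definition hv (v : V) := if high v then INR (deg N v) else 1.
Definition child (d : nat) (v : V) := filter (fun y => Nat.eqb (dist N o y) (S d)) (N v).
Definition step (d : nat) (p : V * R) :=
  map (fun y => (y, if high y then 1 else r * snd p / hv (fst p))) (child d (fst p)).
Fixpoint Q (d : nat) : list (V * R) :=
  match d with O => (o, 1) :: nil | S d' => flat_map (step d') (Q d') end.

Definition Inv (d : nat) (p : V * R) : Prop :=
  let (v, psi) := p in dist N o v = d /\ 0 < psi /\ (high v = true -> psi = 1) /\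
  (1 <= psi \/ exists w s, high w = true /\ (dist N o w <= d)%nat /\ (dist N w v <= s)%nat /\
      exp (k * INR s) / INR (deg N w) <= psi).

Lemma child_spec d v y : In y (child d v) <-> In y (N v) /\ dist N o y = S d.
Proof. unfold child. rewrite filter_In. rewrite Nat.eqb_eq. tauto. Qed.

Lemma r_ge1 : 1 <= r.
Proof. unfold r. rewrite <- exp_0. apply exp_le'. pose proof k_pos; lra. Qed.

Lemma dist0 : dist N o o = 0%nat.
Proof. pose proof (dist_le N Hg o o 0 (walk0 _ o)). lia. Qed.

Lemma high_child d v psi y : Inv d (v, psi) -> In y (child d v) -> high y = true ->
  1 <= r * psi.
Proof.
  intros [Dv [Pp [Hh Hc]]] Hy Hhy. apply child_spec in Hy as [Ay Dy].
  pose proof r_ge1. destruct Hc as [Hc|[w [s [Hw [Dw [Dwv Hpsi]]]]]].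
  - nra.
  - assert (w <> y) by (intros ->; lia).
    destruct (pair_bound w y H0 Hw Hhy) as [B _].
    assert (T : (dist N w y <= S s)%nat).
    { pose proof (dist_tri N Hg w v y). pose proof (dist_adj N Hg v y Ay). lia. }
    apply le_INR in T. rewrite S_INR in T.
    pose proof k_pos.
    assert (exp (k * INR (dist N w y)) <= r * exp (k * INR s)).
    { unfold r. rewrite <- exp_plus. apply exp_le'. nra. }
    assert (0 < INR (deg N w)) by (apply lt_0_INR; apply high_spec in Hw; lia).
    assert (Z : r * (exp (k * INR s) / INR (deg N w)) <= r * psi) by (apply Rmult_le_compat_l; lra).
    unfold Rdiv in Z. rewrite <- Rmult_assoc in Z.
    assert (1 <= r * exp (k * INR s) * / INR (deg N w)).
    { apply Rmult_le_reg_r with (INR (deg N w)); auto. rewrite Rmult_assoc, Rinv_l by lra. lra. }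
    lra.
Qed.

Lemma high_nochild d v psi y : Inv d (v, psi) -> In y (child d v) -> high v = true -> high y = false.
Proof.
  intros [Dv _] Hy Hv. apply child_spec in Hy as [Ay Dy].
  destruct (high y) eqn:Hhy; auto. exfalso.
  assert (v <> y) by (intros ->; lia).
  destruct (pair_bound v y H Hv Hhy) as [_ B].
  pose proof (dist_adj N Hg v y Ay). apply le_INR in H0. simpl in H0. lra.
Qed.

Lemma Q_inv d p : In p (Q d) -> Inv d p.
Proof.
  revert p. induction d; intros p Hp.
  - simpl in Hp. destruct Hp as [<-|[]]. simpl. rewrite dist0.
    split; auto. split; [lra|]. split; auto. left; lra.
  - simpl in Hp. apply in_flat_map in Hp as [[v psi] [Hq Hs]].
    pose proof (IHd _ Hq) as I. unfold step in Hs. apply in_map_iff in Hs as [y [<- Hy]].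
    simpl fst in *. simpl snd. pose proof Hy as Hy'. apply child_spec in Hy' as [Ay Dy].
    pose proof r_ge1. pose proof k_pos.
    destruct I as [Dv [Pp [Hh Hc]]].
    destruct (high y) eqn:Hhy.
    + simpl. split; auto. split; [lra|]. split; auto. left; lra.
    + simpl. split; auto. unfold hv.
      destruct (high v) eqn:Hv.
      * assert (0 < INR (deg N v)) by (apply lt_0_INR; apply high_spec in Hv; lia).
        rewrite (Hh eq_refl). split. { apply Rdiv_lt_0_compat; lra. }
        split; [intros Hx; congruence|]. right. exists v, 1%nat. split; auto. split; [lia|].
        split. apply dist_adj; auto.
        simpl INR. rewrite Rmult_1_r. unfold r. lra.
      * rewrite Rdiv_1_r. split; [nra|]. split; [intros Hx; congruence|].
        destruct Hc as [Hc|[w [s [Hw [Dw [Dwv Hpsi]]]]]]; [left; nra|].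
        right. exists w, (S s). split; auto. split; [lia|]. split.
        { pose proof (dist_tri N Hg w v y). pose proof (dist_adj N Hg v y Ay). lia. }
        assert (0 < INR (deg N w)) by (apply lt_0_INR; apply high_spec in Hw; lia).
        rewrite S_INR, Rmult_plus_distr_l, Rmult_1_r, exp_plus. fold r.
        unfold Rdiv in *. rewrite (Rmult_comm (exp _) r), Rmult_assoc.
        apply Rmult_le_compat_l; lra.
Qed.

Lemma Q_cover d x : dist N o x = d -> exists psi, In (x, psi) (Q d).
Proof.
  revert x. induction d; intros x Hd.
  - pose proof (dist_walk N Hg o x) as W. rewrite Hd in W. inversion W; subst.
    exists 1. simpl. auto.
  - destruct (dist_pred N Hg o x d Hd) as [y [Ay Dy]].
    destruct (IHd y Dy) as [psi Hq]. eexists. simpl. apply in_flat_map.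
    exists (y, psi). split; auto. unfold step. apply in_map_iff. exists x. split; [reflexivity|].
    apply child_spec. auto.
Qed.

Lemma sumf_scale {A} (f : A -> R) a l : sumf (fun x => a * f x) l = a * sumf f l.
Proof. unfold sumf; induction l; simpl; [ring|]. rewrite IHl; ring. Qed.

Lemma sumf_map {A B} (f : B -> R) (g : A -> B) l : sumf f (map g l) = sumf (fun x => f (g x)) l.
Proof. unfold sumf. rewrite map_map. reflexivity. Qed.

Lemma step_sum d p : Inv d p -> sumf snd (step d p) <= INR nstar * r * snd p.
Proof.
  intros I. destruct p as [v psi]. unfold step. rewrite sumf_map. simpl fst; simpl snd.
  pose proof I as [Dv [Pp [Hh Hc]]].
  pose proof r_ge1.
  assert (Lc : (length (child d v) <= deg N v)%nat) by apply filter_length_le.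
  assert (3 <= INR nstar) by (replace 3 with (INR 3) by (simpl; lra); apply le_INR; lia).
  unfold hv. destruct (high v) eqn:Hv.
  - assert (I1 : Inv d (v,1)) by (rewrite <- (Hh eq_refl); exact I).
    rewrite (Hh eq_refl). assert (0 < INR (deg N v)) by (apply lt_0_INR; apply high_spec in Hv; lia).
    eapply Rle_trans. apply sumf_le_len with (m := r * 1 / INR (deg N v)).
    { intros y Hy. rewrite (high_nochild d v 1 y I1 Hy Hv). lra. }
    apply le_INR in Lc.
    assert (INR (length (child d v)) * (r * 1 / INR (deg N v)) <= r).
    { unfold Rdiv. apply Rle_trans with (INR (deg N v) * (r * 1 * / INR (deg N v))).
      apply Rmult_le_compat_r; auto. left; apply Rmult_lt_0_compat; [lra|]. apply Rinv_0_lt_compat; lra.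
      right. field. lra. }
    nra.
  - eapply Rle_trans. apply sumf_le_len with (m := r * psi).
    { intros y Hy. destruct (high y) eqn:Hy'.
      - eapply high_child; eauto.
      - rewrite Rdiv_1_r. lra. }
    assert (T : (deg N v <= nstar)%nat).
    { destruct (Nat.le_gt_cases (deg N v) nstar) as [T|T]; auto. apply high_spec in T. congruence. }
    assert (INR (length (child d v)) <= INR nstar) by (apply le_INR; lia).
    assert (0 <= r * psi) by nra. nra.
Qed.

Lemma Q_sum d : sumf snd (Q d) <= (INR nstar * r) ^ d.
Proof.
  induction d.
  - unfold sumf; simpl. lra.
  - simpl Q. rewrite sumf_flat.
    eapply Rle_trans. apply sumf_mono with (g := fun p => INR nstar * r * snd p).
    { intros p Hp. apply step_sum. apply Q_inv; auto. }
    rewrite sumf_scale. simpl. apply Rmult_le_compat_l; auto.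
    apply Rmult_le_pos. apply pos_INR. pose proof r_ge1; lra.
Qed.

Definition Dd (A0 : R) (j : nat) := INR nstar + A0 * exp (k * INR j).

Lemma Dd_mono A0 j j' : 0 <= A0 -> (j <= j')%nat -> Dd A0 j <= Dd A0 j'.
Proof.
  intros HA Hj. unfold Dd. apply Rplus_le_compat_l. apply Rmult_le_compat_l; auto.
  apply exp_le'. apply le_INR in Hj. pose proof k_pos. nra.
Qed.

Lemma Dd_ge3 A0 j : 0 <= A0 -> 3 <= Dd A0 j.
Proof.
  intros HA. unfold Dd. assert (3 <= INR nstar) by (replace 3 with (INR 3) by (simpl; lra); apply le_INR; lia).
  pose proof (exp_pos (k * INR j)). nra.
Qed.

Lemma Q_len A0 (HA0 : 0 <= A0) (HA : forall v, INR (deg N v) <= Dd A0 (dist N o v)) d :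
  INR (length (Q d)) <= (INR nstar * r) ^ d * Dd A0 d.
Proof.
  pose proof (Dd_ge3 A0 d HA0) as D3.
  assert (forall p, In p (Q d) -> / Dd A0 d <= snd p).
  { intros [v psi] Hp. pose proof (Q_inv d _ Hp) as [Dv [Pp [Hh Hc]]]. simpl.
    destruct Hc as [Hc|[w [s [Hw [Dw [Dwv Hpsi]]]]]].
    - apply Rle_trans with 1; auto. rewrite <- Rinv_1. apply Rinv_le_contravar; lra.
    - assert (0 < INR (deg N w)) by (apply lt_0_INR; apply high_spec in Hw; lia).
      assert (INR (deg N w) <= Dd A0 d) by (eapply Rle_trans; [apply HA|apply Dd_mono; auto]).
      assert (1 <= exp (k * INR s)).
      { rewrite <- exp_0. apply exp_le'. pose proof k_pos. pose proof (pos_INR s). nra. }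
      apply Rle_trans with (/ INR (deg N w)). apply Rinv_le_contravar; lra.
      apply Rle_trans with (exp (k * INR s) / INR (deg N w)); auto.
      unfold Rdiv. pose proof (Rinv_0_lt_compat _ H). nra. }
  pose proof (sumf_ge_len snd (Q d) _ H). pose proof (Q_sum d).
  assert (INR (length (Q d)) * / Dd A0 d <= (INR nstar * r) ^ d) by lra.
  apply Rmult_le_reg_r with (/ Dd A0 d). apply Rinv_0_lt_compat; lra.
  rewrite Rmult_assoc, Rinv_r, Rmult_1_r by lra. auto.
Qed.

Lemma term_bound A0 (HA0 : 0 <= A0) (HA : forall v, INR (deg N v) <= Dd A0 (dist N o v))
  alpha theta x : 0 < theta ->
  Theta_term N o alpha theta x <=
  Dd A0 (S (dist N o x)) * (Rpower (Dd A0 (S (dist N o x)) * Dd A0 (S (dist N o x))) theta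
     * exp (- alpha * INR (dist N o x))).
Proof.
  intros Ht. set (d := dist N o x). set (D := Dd A0 (S d)).
  pose proof (Dd_ge3 A0 (S d) HA0) as D3. fold D in D3.
  change (Theta_term N o alpha theta x) with
    (sumf (fun y => Rpower (INR (deg N x * deg N y)) theta * exp (- alpha * INR (dist N o x))) (N x)).
  assert (Hx : INR (deg N x) <= D) by (eapply Rle_trans; [apply HA|apply Dd_mono; auto]).
  eapply Rle_trans. apply sumf_le_len with (m := Rpower (D * D) theta * exp (- alpha * INR d)).
  - intros y Hy. fold d. apply Rmult_le_compat_r. left; apply exp_pos.
    assert (1 <= deg N x)%nat. { unfold deg. destruct (N x); [destruct Hy|simpl; lia]. }
    assert (Ayx : In x (N y)) by (apply (Hs N Hg); exact Hy).
    assert (1 <= deg N y)%nat. { unfold deg. destruct (N y); [destruct Ayx|simpl; lia]. }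
    assert (Dy : (dist N o y <= S d)%nat).
    { pose proof (dist_tri N Hg o x y). pose proof (dist_adj N Hg x y Hy). fold d in H1. lia. }
    assert (INR (deg N y) <= D) by (eapply Rle_trans; [apply HA|apply Dd_mono; auto]).
    apply le_INR in H. apply le_INR in H0. simpl in H, H0.
    apply Rle_Rpower_l. lra. rewrite mult_INR. split. nra. apply Rmult_le_compat; lra.
  - unfold deg at 1 in Hx. apply Rmult_le_compat_r; auto.
    apply Rmult_le_pos; left; [apply Rpower_pos|apply exp_pos].
Qed.

Definition rho (theta : R) := ln (INR nstar) + 3 * k + 2 * theta * k.
Definition Mc (A0 theta : R) :=
  (INR nstar + A0) * (INR nstar + A0) * Rpower ((INR nstar + A0) * (INR nstar + A0)) theta
  * exp (k + 2 * theta * k).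

Lemma Dd_exp A0 j : 0 <= A0 -> Dd A0 j <= (INR nstar + A0) * exp (k * INR j).
Proof.
  intros HA. unfold Dd. assert (1 <= exp (k * INR j)).
  { rewrite <- exp_0. apply exp_le'. pose proof k_pos. pose proof (pos_INR j). nra. }
  pose proof (pos_INR nstar). nra.
Qed.

Lemma Q_term_bound A0 (HA0 : 0 <= A0) (HA : forall v, INR (deg N v) <= Dd A0 (dist N o v))
  alpha theta d : 0 < theta ->
  sumf (fun p => Theta_term N o alpha theta (fst p)) (Q d) <= Mc A0 theta * (exp (rho theta - alpha)) ^ d.
Proof.
  intros Ht.
  set (T := Dd A0 (S d) * (Rpower (Dd A0 (S d) * Dd A0 (S d)) theta * exp (- alpha * INR d))).
  eapply Rle_trans. apply sumf_le_len with (m := T).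
  { intros [v psi] Hp. pose proof (Q_inv d _ Hp) as [Dv _]. simpl fst. unfold T. rewrite <- Dv.
    apply term_bound; auto. }
  pose proof (Q_len A0 HA0 HA d) as QL.
  pose proof (Dd_ge3 A0 d HA0). pose proof (Dd_ge3 A0 (S d) HA0).
  assert (Tp : 0 <= T).
  { unfold T. apply Rmult_le_pos. lra. apply Rmult_le_pos; left; [apply Rpower_pos|apply exp_pos]. }
  eapply Rle_trans. apply Rmult_le_compat_r. exact Tp. exact QL.
  set (ed := INR d). set (Z := INR nstar + A0).
  assert (Z3 : 3 <= Z). { unfold Z. assert (3 <= INR nstar) by (replace 3 with (INR 3) by (simpl; lra); apply le_INR; lia). lra. }
  pose proof r_ge1. pose proof k_pos.
  assert (Bp : 0 < INR nstar * r). { apply Rmult_lt_0_compat; [apply lt_0_INR; lia|lra]. }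
  assert (lnB : ln (INR nstar * r) = ln (INR nstar) + k).
  { unfold r. rewrite ln_mult, ln_exp; [reflexivity|apply lt_0_INR; lia|apply exp_pos]. }
  assert (E1 : (INR nstar * r) ^ d = exp (ed * ln (INR nstar * r))).
  { unfold ed. rewrite exp_INR_mul, exp_ln; auto. }
  assert (E2 : Dd A0 d <= Z * exp (k * ed)) by (apply Dd_exp; auto).
  assert (E3 : Dd A0 (S d) <= Z * exp (k * (ed + 1))) by (unfold ed; rewrite <- S_INR; apply Dd_exp; auto).
  assert (E4 : Rpower (Dd A0 (S d) * Dd A0 (S d)) theta <=
               Rpower (Z * Z) theta * exp (theta * (2 * k * (ed + 1)))).
  { eapply Rle_trans. apply Rle_Rpower_l with (b := (Z * exp (k * (ed + 1))) * (Z * exp (k * (ed + 1)))).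
    lra. split. nra. apply Rmult_le_compat; lra.
    replace ((Z * exp (k * (ed + 1))) * (Z * exp (k * (ed + 1)))) with
      ((Z * Z) * exp (2 * k * (ed + 1))).
    2:{ replace (2 * k * (ed + 1)) with (k * (ed + 1) + k * (ed + 1)) by ring. rewrite exp_plus. ring. }
    rewrite <- Rpower_mult_distr by (try apply exp_pos; nra).
    right. f_equal. unfold Rpower. rewrite ln_exp; try reflexivity. }
  assert (Hexp : exp (ed * ln (INR nstar * r)) * exp (k * ed) * exp (k * (ed + 1)) *
       exp (theta * (2 * k * (ed + 1))) * exp (- alpha * ed) =
       exp (k + 2 * theta * k) * exp (rho theta - alpha) ^ d).
  { rewrite <- exp_INR_mul. fold ed. rewrite <- !exp_plus. f_equal. rewrite lnB. unfold rho. ring. }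
  assert (X1 : (INR nstar * r) ^ d * Dd A0 d <= exp (ed * ln (INR nstar * r)) * (Z * exp (k * ed))).
  { rewrite E1. apply Rmult_le_compat_l; auto. left; apply exp_pos. }
  assert (X2 : T <= Z * exp (k * (ed + 1)) *
        (Rpower (Z * Z) theta * exp (theta * (2 * k * (ed + 1))) * exp (- alpha * ed))).
  { unfold T. fold ed. apply Rmult_le_compat. lra.
    apply Rmult_le_pos; left; [apply Rpower_pos|apply exp_pos]. auto.
    apply Rmult_le_compat_r. left; apply exp_pos. auto. }
  eapply Rle_trans. apply Rmult_le_compat; [|exact Tp|exact X1|exact X2].
  { apply Rmult_le_pos. apply pow_le; lra. lra. }
  unfold Mc. fold Z. right.
  replace (exp (ed * ln (INR nstar * r)) * (Z * exp (k * ed)) *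
    (Z * exp (k * (ed + 1)) * (Rpower (Z * Z) theta * exp (theta * (2 * k * (ed + 1))) * exp (- alpha * ed))))
  with (Z * Z * Rpower (Z * Z) theta * (exp (ed * ln (INR nstar * r)) * exp (k * ed) * exp (k * (ed + 1)) *
       exp (theta * (2 * k * (ed + 1))) * exp (- alpha * ed))) by ring.
  rewrite Hexp. ring.
Qed.

Lemma rho_nonneg theta : 0 < theta -> 0 <= rho theta.
Proof.
  intros Ht. unfold rho. pose proof k_pos.
  assert (0 <= ln (INR nstar)).
  { rewrite <- ln_1. apply ln_le'. lra. replace 1 with (INR 1) by reflexivity. apply le_INR; lia. }
  nra.
Qed.

Lemma dist_le_sum (l : list V) x : In x l -> (dist N o x <= fold_right plus 0 (map (dist N o) l))%nat.
Proof. induction l; simpl; [tauto|]. intros [->|H]; [lia|]. specialize (IHl H). lia. Qed.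

Lemma term_nonneg alpha theta x : 0 <= Theta_term N o alpha theta x.
Proof.
  change (Theta_term N o alpha theta x) with
    (sumf (fun y => Rpower (INR (deg N x * deg N y)) theta * exp (- alpha * INR (dist N o x))) (N x)).
  apply sumf_nonneg. intros y _. apply Rmult_le_pos; left; [apply Rpower_pos|apply exp_pos].
Qed.

Lemma finite_main theta alpha : 0 < theta -> rho theta < alpha -> Theta_finite N o alpha theta.
Proof.
  intros Ht Ha. destruct deg_global as [A0 [HA0 HA]].
  assert (HA' : forall v, INR (deg N v) <= Dd A0 (dist N o v)) by (intros; apply HA).
  set (q := exp (rho theta - alpha)).
  assert (Hq : 0 <= q < 1).
  { unfold q. split. left; apply exp_pos. rewrite <- exp_0. apply exp_increasing. lra. }
  assert (HM : 0 <= Mc A0 theta).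
  { unfold Mc. pose proof (pos_INR nstar).
    apply Rmult_le_pos; [apply Rmult_le_pos; [nra|left; apply Rpower_pos]|left; apply exp_pos]. }
  exists (Mc A0 theta / (1 - q)). intros l Hl.
  change (sumf (Theta_term N o alpha theta) l <= Mc A0 theta / (1 - q)).
  set (Nm := fold_right plus 0%nat (map (dist N o) l)).
  set (L := flat_map (fun d => map fst (Q d)) (seq 0 (S Nm))).
  eapply Rle_trans. apply (sumf_sub _ l L); auto. apply term_nonneg.
  { intros x Hx. unfold L. apply in_flat_map. exists (dist N o x). split.
    - apply in_seq. pose proof (dist_le_sum l x Hx). fold Nm in H. lia.
    - destruct (Q_cover (dist N o x) x eq_refl) as [psi Hp]. apply in_map_iff.
      exists (x, psi). auto. }
  unfold L. rewrite sumf_flat.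
  eapply Rle_trans. apply sumf_mono with (g := fun d => Mc A0 theta * q ^ d).
  { intros d _. rewrite sumf_map. apply Q_term_bound; auto. }
  rewrite sumf_scale. pose proof (geom q 0 (S Nm) Hq). simpl pow in H.
  unfold Rdiv in *. rewrite Rmult_1_l in H. apply Rmult_le_compat_l; auto.
Qed.
End Main.

Theorem theorem5p2 :
  forall (nstar : nat) (upsilon eps theta : R),
    (2 < nstar)%nat -> 0 < upsilon -> 0 < eps ->
    1 < phi_ll upsilon eps (INR (S nstar)) ->
    0 < theta ->
    exists alpha0 : R, 0 <= alpha0 /\
      forall (V : Type) (N : V -> list V) (o : V),
        is_graph N ->
        in_family N nstar (phi_ll upsilon eps) ->
        forall alpha : R, alpha0 < alpha -> Theta_finite N o alpha theta.
Proof.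
  intros nstar ups eps theta H2 Hu He Hp Ht.
  exists (rho nstar ups eps theta). split.
  - eapply rho_nonneg; eauto.
  - intros V N o Hg Hf alpha Ha. apply (finite_main nstar ups eps H2 Hu He Hp N o Hg Hf); auto.
Qed.
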